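(* Let $G$ be a $3$-graph on $n$ vertices with $4 \mid n$ and $\delta(G) \ge 3n/4-1$. Let $(A,B)$ be a partition of $V(G)$ with $3n/16 < |A| < 5n/16$. Then $G$ contains a copy of $K^3_4$ with an odd number of vertices in both $A$ and $B$.
   Context: A $3$-graph is a set of $3$-element subsets (edges) of a vertex set; $\delta(G)$ is the largest $m$ such that every pair of vertices lies in at least $m$ edges. A copy of $K^3_4$ in $G$ is a $4$-set of vertices all of whose $3$-subsets are edges of $G$. *)

(* Defs.v *)
From mathcomp Require Import all_boot.
Set Implicit Arguments. Unset Strict Implicit. Unset Printing Implicit Defensive.

Definition is_3graph (T : finType) (G : {set {set T}}) : Prop :=
  forall e, e \in G -> #|e| = 3.

Definition codeg (T : finType) (G : {set {set T}}) (x y : T) : nat :=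
  #|[set e in G | (x \in e) && (y \in e)]|.

Definition is_K43 (T : finType) (G : {set {set T}}) (S : {set T}) : Prop :=
  #|S| = 4 /\ forall e : {set T}, e \subset S -> #|e| = 3 -> e \in G.

(* Main.v *)
Require Import Defs.
From mathcomp Require Import all_boot all_algebra zify ring.
From Stdlib Require Import Classical.
Set Implicit Arguments. Unset Strict Implicit. Unset Printing Implicit Defensive.

Definition E (T : finType) (G : {set {set T}}) (x y z : T) : bool := [set x; y; z] \in G.
Definition Nm (T : finType) (G : {set {set T}}) (P : {set T}) (p q : T) : nat :=
  \sum_w [&& w \in P, w != p, w != q & ~~ E G p q w].

Lemma E12 (T : finType) (G : {set {set T}}) x y z : E G x y z = E G y x z.
Proof.
rewrite /E (_ : [set y; x; z] = [set x; y; z]) //.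
apply/setP => u; rewrite !inE; by case: (u == x); case: (u == y); case: (u == z).
Qed.
Lemma E23 (T : finType) (G : {set {set T}}) x y z : E G x y z = E G x z y.
Proof.
rewrite /E (_ : [set x; z; y] = [set x; y; z]) //.
apply/setP => u; rewrite !inE; by case: (u == x); case: (u == y); case: (u == z).
Qed.

Lemma sumb_card (T : finType) (f : pred T) : \sum_w (f w : nat) = #|[set w | f w]|.
Proof. by rewrite -sum1dep_card [RHS]big_mkcond; apply: eq_bigr => w _; case: (f w). Qed.

Lemma sumb_split (T : finType) (f g : pred T) :
  \sum_w (f w : nat) = \sum_w (f w && g w : nat) + \sum_w (f w && ~~ g w : nat).
Proof. by rewrite -big_split; apply: eq_bigr => w _; case: (f w); case: (g w). Qed.

Lemma Nm_split (T : finType) (G : {set {set T}}) P p q :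
  Nm G P p q + Nm G (~: P) p q = Nm G setT p q.
Proof.
rewrite /Nm -big_split; apply: eq_bigr => w _; rewrite !inE.
by case: (w \in P); case: (w != p); case: (w != q); case: (E G p q w).
Qed.

Lemma Nm_le (T : finType) (G : {set {set T}}) P p q : Nm G P p q <= Nm G setT p q.
Proof. by rewrite -(Nm_split G P); apply: leq_addr. Qed.

Lemma NmC (T : finType) (G : {set {set T}}) P p q : Nm G P p q = Nm G P q p.
Proof.
rewrite /Nm; apply: eq_bigr => w _; rewrite E12.
by case: (w \in P); case: (w != p); case: (w != q).
Qed.

Lemma card3 (T : finType) (x y z : T) : x != y -> x != z -> y != z -> #|[set x; y; z]| = 3.
Proof.
move=> xy xz yz.
have -> : [set x; y; z] = x |: (y |: [set z]) by apply/setP => u; rewrite !inE orbA.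
by rewrite cardsU1 cardsU1 cards1 !inE negb_or xy xz yz.
Qed.

Lemma miss_bound (T : finType) (G : {set {set T}}) x y :
  is_3graph G -> x != y -> 3 * #|T| <= 4 * codeg G x y + 4 ->
  4 * Nm G setT x y + 4 <= #|T|.
Proof.
move=> H3 xy Hc.
have Hsum : \sum_w ((w != x) && (w != y) : nat) = #|T| - 2.
  rewrite sumb_card.
  have -> : [set w | (w != x) && (w != y)] = ~: [set x; y].
    by apply/setP => w; rewrite !inE negb_or.
  by rewrite cardsCs setCK cards2 xy.
have Hspl := sumb_split (fun w => (w != x) && (w != y)) (E G x y).
have -> : Nm G setT x y = \sum_w (((w != x) && (w != y)) && ~~ E G x y w : nat).
  by rewrite /Nm; apply: eq_bigr => w _; rewrite in_setT /= andbA.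
have Hcod : codeg G x y <= \sum_w (((w != x) && (w != y)) && E G x y w : nat).
  rewrite sumb_card /codeg.
  apply: leq_trans (leq_imset_card (fun w => [set x; y; w]) _).
  apply: subset_leq_card; apply/subsetP => e; rewrite inE => /andP [eG /andP [xe ye]].
  have ce := H3 e eG.
  have : 0 < #|e :\ x :\ y|.
    have h1 := cardsD1 x e; have h2 := cardsD1 y (e :\ x).
    rewrite xe in h1; rewrite !inE eq_sym xy ye /= in h2. lia.
  case/card_gt0P => w; rewrite !inE => /and3P [wy wx we].
  have ee : e = [set x; y; w].
    apply/eqP; rewrite eq_sym eqEcard ce; apply/andP; split.
      by apply/subsetP => u; rewrite !inE => /orP [/orP [] |] /eqP ->.
    by rewrite card3 // eq_sym.
  by apply/imsetP; exists w => //; rewrite inE wx wy /E -ee eG.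
have := max_card [set x; y]; rewrite cards2 xy => Hn.
rewrite Hsum in Hspl. lia.
Qed.

Lemma mkK4 (T : finType) (G : {set {set T}}) (P : {set T}) x y z w :
  x \in P -> y \notin P -> z \notin P -> w \notin P -> y != z -> y != w -> z != w ->
  E G x y z -> E G x y w -> E G x z w -> E G y z w ->
  exists S, is_K43 G S /\ odd #|S :&: P| /\ odd #|S :&: ~: P|.
Proof.
move=> xP yP zP wP yz yw zw Exyz Exyw Exzw Eyzw.
have xy : x != y by apply: contraNneq yP => <-.
have xz : x != z by apply: contraNneq zP => <-.
have xw : x != w by apply: contraNneq wP => <-.
set S := [set x; y; z; w].
have cS : #|S| = 4.
  have -> : S = x |: (y |: (z |: [set w])) by apply/setP => u; rewrite !inE !orbA.
  by rewrite !cardsU1 cards1 !inE !negb_or xy xz xw yz yw zw.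
have c1 : 1 <= #|S :&: P|.
  by apply/card_gt0P; exists x; rewrite !inE eqxx xP.
have c3 : 3 <= #|S :\: P|.
  rewrite -(card3 yz yw zw); apply: subset_leq_card; apply/subsetP => u.
  by rewrite !inE => /orP [/orP [] |] /eqP ->; rewrite ?yP ?zP ?wP eqxx ?orbT.
have cID := cardsID P S.
exists S; split; last first.
  rewrite -setDE; move: c1 c3 cID; rewrite cS.
  move: (#|S :&: P|) (#|S :\: P|) => p q hp hq hpq.
  have -> : p = 1 by clear -hp hq hpq; lia.
  by have -> : q = 3 by clear -hp hq hpq; lia.
split => // e eS ce.
have : ~~ (S \subset e).
  apply/negP => Se; have := subset_leq_card Se; rewrite cS ce.
  by [].
case/subsetPn => v vS ve.
have key : forall t : {set T}, e \subset t -> #|t| = 3 -> t \in G -> e \in G.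
  move=> t et ct tG; suff -> : e = t by [].
  by apply/eqP; rewrite eqEcard et ct ce.
have Hsub : forall u, u \in e -> u != v /\ ((u == x) || (u == y) || (u == z) || (u == w)).
  move=> u ue; split; first by apply: contraNneq ve => <-.
  by move: (subsetP eS u ue); rewrite !inE.
move: vS; rewrite !inE => /orP [/orP [/orP [] |] |] /eqP ev; subst v.
- apply: (key [set y; z; w]) => //; last by rewrite card3.
  apply/subsetP => u /Hsub [uv]; rewrite (negbTE uv) /= !inE //.
- apply: (key [set x; z; w]) => //; last by rewrite card3.
  apply/subsetP => u /Hsub [uv]; rewrite (negbTE uv) /= orbF !inE //.
- apply: (key [set x; y; w]) => //; last by rewrite card3.
  apply/subsetP => u /Hsub [uv]; rewrite (negbTE uv) /= orbF !inE //.
- apply: (key [set x; y; z]) => //; last by rewrite card3.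
  apply/subsetP => u /Hsub [uv]; rewrite (negbTE uv) /= orbF !inE //.
Qed.

Definition g2 (T : finType) (P : {set T}) (y z : T) : bool :=
  [&& y \notin P, z \notin P & y != z].
Definition h3 (T : finType) (P : {set T}) (y z w : T) : bool :=
  [&& w \notin P, y != w & z != w].
Definition G3 (T : finType) (P : {set T}) (y z w : T) : bool :=
  [&& y \notin P, z \notin P, w \notin P, y != z, y != w & z != w].

Lemma G3_23 (T : finType) (P : {set T}) y z w : G3 P y z w = G3 P y w z.
Proof.
rewrite /G3 (eq_sym w z).
by case: (y \in P); case: (z \in P); case: (w \in P); case: (y == z); case: (y == w); case: (z == w).
Qed.

Lemma G3_rot (T : finType) (P : {set T}) y z w : G3 P y z w = G3 P z w y.
Proof.
rewrite /G3 (eq_sym w y) (eq_sym z y).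
by case: (y \in P); case: (z \in P); case: (w \in P); case: (y == z); case: (y == w); case: (z == w).
Qed.

Lemma G3E (T : finType) (P : {set T}) y z w : G3 P y z w = g2 P y z && h3 P y z w.
Proof.
rewrite /G3 /g2 /h3.
by case: (y \in P); case: (z \in P); case: (w \in P); case: (y == z); case: (y == w); case: (z == w).
Qed.

Lemma cnt2 (T : finType) (P : {set T}) y z : y \notin P -> z \notin P -> y != z ->
  \sum_w (h3 P y z w : nat) = #|~: P| - 2.
Proof.
move=> yP zP yz; rewrite sumb_card.
have -> : [set w | h3 P y z w] = ~: P :\ y :\ z.
  by apply/setP => w; rewrite !inE /h3 (eq_sym y w) (eq_sym z w); case: (w \in P); case: (w == y); case: (w == z).
have h1 := cardsD1 y (~: P); have h2 := cardsD1 z (~: P :\ y).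
rewrite !inE yP in h1; rewrite !inE zP eq_sym yz in h2.
move: h1 h2; move: (#|~: P|) (#|~: P :\ y|) (#|~: P :\ y :\ z|) => p q r.
simpl; clear; lia.
Qed.

Lemma cnt1 (T : finType) (P : {set T}) y : y \notin P ->
  \sum_z (g2 P y z : nat) = #|~: P| - 1.
Proof.
move=> yP; rewrite sumb_card.
have -> : [set z | g2 P y z] = ~: P :\ y.
  by apply/setP => w; rewrite !inE /g2 yP (eq_sym y w); case: (w \in P); case: (w == y).
have h1 := cardsD1 y (~: P); rewrite !inE yP in h1.
move: h1; move: (#|~: P|) (#|~: P :\ y|) => p q.
simpl; clear; lia.
Qed.

Lemma cntg2 (T : finType) (P : {set T}) :
  \sum_y \sum_z (g2 P y z : nat) = #|~: P| * (#|~: P| - 1).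
Proof.
transitivity (\sum_y ((y \notin P) : nat) * (#|~: P| - 1)).
  apply: eq_bigr => y _; case yP: (y \in P) => /=.
    by apply: big1 => z _; rewrite /g2 yP.
  by rewrite cnt1 ?yP // mul1n.
rewrite -big_distrl /= sumb_card.
by congr (#|_| * _); apply/setP => y; rewrite !inE.
Qed.

Lemma T3sym (T : finType) (P : {set T}) (F : T -> T -> nat) :
  \sum_y \sum_z \sum_w (G3 P y z w : nat) * F y w =
  \sum_y \sum_z \sum_w (G3 P y z w : nat) * F y z.
Proof.
apply: eq_bigr => y _; rewrite exchange_big; apply: eq_bigr => a _.
by apply: eq_bigr => b _; rewrite G3_23.
Qed.

Lemma T3sym2 (T : finType) (P : {set T}) (F : T -> T -> nat) :
  \sum_y \sum_z \sum_w (G3 P y z w : nat) * F z w =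
  \sum_y \sum_z \sum_w (G3 P y z w : nat) * F y z.
Proof.
rewrite exchange_big; apply: eq_bigr => a _; rewrite exchange_big.
apply: eq_bigr => b _; apply: eq_bigr => c _; by rewrite G3_rot.
Qed.

Lemma T3eval (T : finType) (P : {set T}) (F : T -> T -> nat) :
  \sum_y \sum_z \sum_w (G3 P y z w : nat) * F y z =
  (#|~: P| - 2) * \sum_y \sum_z (g2 P y z : nat) * F y z.
Proof.
rewrite big_distrr; apply: eq_bigr => y _; rewrite big_distrr; apply: eq_bigr => z _ /=.
case g: (g2 P y z); last by rewrite mul0n muln0 big1 // => w _; rewrite G3E g.
move: g; rewrite /g2 => /and3P [yP zP yz].
transitivity (\sum_w (h3 P y z w : nat) * F y z).
  by apply: eq_bigr => w _; rewrite G3E /g2 yP zP yz.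
by rewrite -big_distrl /= cnt2 // mul1n mulnC.
Qed.

Definition noK (T : finType) (G : {set {set T}}) (P : {set T}) : Prop :=
  forall x y z w, x \in P -> y \notin P -> z \notin P -> w \notin P ->
  y != z -> y != w -> z != w ->
  E G x y z -> E G x y w -> E G x z w -> E G y z w -> False.

Lemma Erot (T : finType) (G : {set {set T}}) x y z : E G x y z = E G y z x.
Proof. by rewrite E12 E23. Qed.

Lemma cardP_sum (T : finType) (P : {set T}) : #|P| = \sum_x ((x \in P) : nat).
Proof. by rewrite sumb_card; apply: eq_card => x; rewrite inE. Qed.

Lemma KeyP (T : finType) (G : {set {set T}}) (P : {set T}) y z w :
  noK G P -> y \notin P -> z \notin P -> w \notin P -> y != z -> y != w -> z != w ->
  E G y z w -> #|P| <= Nm G P y z + Nm G P y w + Nm G P z w.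
Proof.
move=> H yP zP wP yz yw zw Eyzw.
rewrite cardP_sum /Nm -!big_split; apply: leq_sum => x _.
case xP: (x \in P) => //=.
have xy : x != y by apply: contraNneq yP => <-.
have xz : x != z by apply: contraNneq zP => <-.
have xw : x != w by apply: contraNneq wP => <-.
rewrite xy xz xw /= -(Erot G x y z) -(Erot G x y w) -(Erot G x z w).
case e1: (E G x y z); case e2: (E G x y w); case e3: (E G x z w) => //.
by case: (H x y z w).
Qed.

Definition SA (T : finType) (G : {set {set T}}) (P : {set T}) :=
  \sum_y \sum_z (g2 P y z : nat) * Nm G P y z.
Definition SB (T : finType) (G : {set {set T}}) (P : {set T}) :=
  \sum_y \sum_z (g2 P y z : nat) * Nm G (~: P) y z.

Lemma step1 (T : finType) (G : {set {set T}}) (P : {set T}) y z :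
  noK G P -> g2 P y z ->
  #|P| * (#|~: P| - 2) <=
  \sum_w (h3 P y z w : nat) * (Nm G P y z + Nm G P y w + Nm G P z w) + #|P| * Nm G (~: P) y z.
Proof.
move=> H /and3P [yP zP yz].
rewrite -(cnt2 yP zP yz) (sumb_split _ (E G y z)) mulnDr.
have -> : \sum_w (h3 P y z w && ~~ E G y z w : nat) = Nm G (~: P) y z.
  apply: eq_bigr => w _; rewrite /h3 !inE (eq_sym y w) (eq_sym z w).
  by case: (w \in P); case: (w == y); case: (w == z); case: (E G y z w).
rewrite leq_add2r big_distrr /=; apply: leq_sum => w _.
case hw: (h3 P y z w); case ew: (E G y z w); rewrite /= ?muln0 ?mul0n ?muln1 ?mul1n //.
move: hw; rewrite /h3 => /and3P [wP yw zw]; exact: KeyP.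
Qed.

Lemma F1 (T : finType) (G : {set {set T}}) (P : {set T}) :
  noK G P ->
  #|P| * (#|~: P| * (#|~: P| - 1) * (#|~: P| - 2)) <= 3 * (#|~: P| - 2) * SA G P + #|P| * SB G P.
Proof.
move=> H.
set b := #|~: P|.
have e1 : #|P| * (b * (b - 1) * (b - 2)) =
          \sum_y \sum_z (g2 P y z : nat) * (#|P| * (b - 2)).
  rewrite mulnC -mulnA [(b - 2) * _]mulnC /b -cntg2 big_distrl /=.
  by apply: eq_bigr => y _; rewrite big_distrl.
rewrite e1.
apply: (@leq_trans (\sum_y \sum_z (g2 P y z : nat) *
   (\sum_w (h3 P y z w : nat) * (Nm G P y z + Nm G P y w + Nm G P z w) + #|P| * Nm G (~: P) y z))).
  apply: leq_sum => y _; apply: leq_sum => z _.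
  case g: (g2 P y z) => //=; rewrite !mul1n; exact: step1.
have e2 : forall y z, (g2 P y z : nat) *
   (\sum_w (h3 P y z w : nat) * (Nm G P y z + Nm G P y w + Nm G P z w) + #|P| * Nm G (~: P) y z)
   = \sum_w (G3 P y z w : nat) * Nm G P y z + \sum_w (G3 P y z w : nat) * Nm G P y w
     + \sum_w (G3 P y z w : nat) * Nm G P z w + #|P| * ((g2 P y z : nat) * Nm G (~: P) y z).
  move=> y z; rewrite mulnDr mulnCA; congr (_ + _).
  rewrite big_distrr -!big_split /=; apply: eq_bigr => w _.
  by rewrite G3E; case: (g2 P y z); case: (h3 P y z w); rewrite /= ?mul1n ?mul0n.
under eq_bigr => y _ do under eq_bigr => z _ do rewrite e2.
rewrite /SA /SB.
have -> : \sum_y \sum_z (\sum_w (G3 P y z w : nat) * Nm G P y z + \sum_w (G3 P y z w : nat) * Nm G P y w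
     + \sum_w (G3 P y z w : nat) * Nm G P z w + #|P| * ((g2 P y z : nat) * Nm G (~: P) y z)) =
   \sum_y \sum_z \sum_w (G3 P y z w : nat) * Nm G P y z +
   \sum_y \sum_z \sum_w (G3 P y z w : nat) * Nm G P y w +
   \sum_y \sum_z \sum_w (G3 P y z w : nat) * Nm G P z w +
   #|P| * \sum_y \sum_z (g2 P y z : nat) * Nm G (~: P) y z.
  rewrite big_distrr -!big_split /=; apply: eq_bigr => y _.
  by rewrite big_distrr -!big_split.
rewrite (T3sym P (Nm G P)) (T3sym2 P (Nm G P)) T3eval -/b.
move: (\sum_y \sum_z (g2 P y z : nat) * Nm G P y z) (\sum_y \sum_z (g2 P y z : nat) * Nm G (~: P) y z) => p q.
clear; nia.
Qed.

Lemma F1b (T : finType) (G : {set {set T}}) (P : {set T}) m :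
  (forall x y, x != y -> Nm G setT x y <= m) ->
  SA G P + SB G P <= #|~: P| * (#|~: P| - 1) * m.
Proof.
move=> Hm; rewrite /SA /SB -big_split /= -cntg2 big_distrl /=.
apply: leq_sum => y _; rewrite -big_split big_distrl /=; apply: leq_sum => z _.
rewrite -mulnDr Nm_split; case g: (g2 P y z); rewrite /= ?mul0n ?mul1n //.
by apply: Hm; move: g => /and3P [].
Qed.

Definition R1 (T : finType) (G : {set {set T}}) (P : {set T}) :=
  \sum_x \sum_y \sum_z ([&& x \in P, y \notin P, z \notin P, z != x, z != y & ~~ E G x y z] : nat).
Definition R2 (T : finType) (G : {set {set T}}) (P : {set T}) :=
  \sum_x \sum_y \sum_z ([&& x \in P, y \notin P, z \in P, z != x, z != y & ~~ E G x y z] : nat).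

Lemma SA_R1 (T : finType) (G : {set {set T}}) (P : {set T}) : SA G P <= R1 G P.
Proof.
rewrite /SA /R1.
under eq_bigr => y _ do under eq_bigr => z _ do rewrite /Nm big_distrr /=.
under eq_bigr => y _ do rewrite exchange_big /=.
rewrite exchange_big /=.
apply: leq_sum => x _; apply: leq_sum => y _; apply: leq_sum => z _.
rewrite /g2 -(Erot G x y z) (eq_sym z x) (eq_sym z y).
case: (x \in P); case: (y \in P); case: (z \in P); case: (x == y); case: (x == z); case: (y == z);
  case: (E G x y z) => //.
Qed.

Lemma SA_R2 (T : finType) (G : {set {set T}}) (P : {set T}) : SA G (~: P) <= R2 G P.
Proof.
rewrite /SA /R2.
under eq_bigr => y _ do under eq_bigr => z _ do rewrite /Nm big_distrr /=.
under eq_bigr => y _ do rewrite exchange_big /=.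
apply: leq_sum => y _; apply: leq_sum => x _; apply: leq_sum => z _.
rewrite /g2 !inE !negbK (E23 G y x z) (eq_sym z x) (eq_sym z y) (eq_sym x y).
case: (x \in P); case: (y \in P); case: (z \in P); case: (y == x); case: (x == z); case: (y == z);
  case: (E G y z x) => //.
Qed.

Lemma F3 (T : finType) (G : {set {set T}}) (P : {set T}) m :
  (forall x y, x != y -> Nm G setT x y <= m) ->
  SA G P + SA G (~: P) <= #|P| * #|~: P| * m.
Proof.
move=> Hm.
apply: leq_trans (leq_add (SA_R1 G P) (SA_R2 G P)) _.
rewrite /R1 /R2 -big_split /=.
have e : #|P| * #|~: P| * m = \sum_x \sum_y ([&& x \in P & y \notin P] : nat) * m.
  rewrite cardP_sum big_distrl big_distrl /=; apply: eq_bigr => x _.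
  rewrite (cardP_sum (~: P)) big_distrr big_distrl /=; apply: eq_bigr => y _.
  by rewrite inE; case: (x \in P); case: (y \in P).
rewrite e; apply: leq_sum => x _; rewrite -big_split /=; apply: leq_sum => y _.
case xy: ([&& x \in P & y \notin P]); last first.
  rewrite mul0n leqn0 addn_eq0 !sum_nat_eq0; apply/andP; split; apply/forallP => z; move: xy;
  by case: (x \in P); case: (y \in P); case: (z \in P); rewrite /= ?andbF.
move: xy => /andP [xP yP].
have xy : x != y by apply: contraNneq yP => <-.
rewrite mul1n; apply: leq_trans (Hm x y xy); rewrite /Nm -big_split /=; apply: leq_sum => z _.
rewrite xP yP in_setT (eq_sym z x) (eq_sym z y) /=.
by case: (z \in P); case: (x == z); case: (y == z); case: (E G x y z).
Qed.

Definition fPW (T : finType) (G : {set {set T}}) (P : {set T}) x y z w : nat :=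
  [&& w \in ~: P, w != x, w != y & ~~ E G x y w] + [&& w \in ~: P, w != x, w != z & ~~ E G x z w]
  + [&& w \in ~: P, w != y, w != z & ~~ E G y z w].

Lemma PW_pt (T : finType) (G : {set {set T}}) (P : {set T}) x y z w :
  noK G P -> x \in P -> y \notin P -> z \notin P -> y != z -> E G x y z ->
  (h3 P y z w : nat) <= fPW G P x y z w.
Proof.
move=> H xP yP zP yz Exyz.
case hw: (h3 P y z w) => //; move: hw; rewrite /h3 => /and3P [wP yw zw].
have wx : w != x by apply: contraNneq wP => ->.
rewrite /fPW !inE wP wx (eq_sym w y) (eq_sym w z) yw zw /=.
case e1: (E G x y w); case e2: (E G x z w); case e3: (E G y z w) => //.
by case: (H x y z w xP yP zP wP yz yw zw Exyz e1 e2 e3).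
Qed.

Lemma PWsum (T : finType) (G : {set {set T}}) (P : {set T}) x y z :
  noK G P -> x \in P -> y \notin P -> z \notin P -> y != z -> E G x y z ->
  #|~: P| - 2 <= Nm G (~: P) x y + Nm G (~: P) x z + Nm G (~: P) y z.
Proof.
move=> H xP yP zP yz Exyz.
rewrite -(cnt2 yP zP yz) /Nm -!big_split /=; apply: leq_sum => w _.
exact: PW_pt.
Qed.

Lemma sum_pt_eq (T : finType) (f g : T -> nat) :
  (forall w, g w <= f w) -> \sum_w f w <= \sum_w g w -> forall w, f w = g w.
Proof.
move=> Hfg Hs w.
have e : \sum_w f w = \sum_w g w + \sum_w (f w - g w).
  rewrite -big_split; apply: eq_bigr => u _ /=; have := Hfg u; move: (f u) (g u) => p q; clear; lia.
have : \sum_w (f w - g w) == 0 by move: Hs; rewrite e; clear; lia.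
rewrite sum_nat_eq0 => /forallP /(_ w) /eqP.
have := Hfg w; clear; lia.
Qed.

Lemma PWexact (T : finType) (G : {set {set T}}) (P : {set T}) x y z u :
  noK G P -> x \in P -> y \notin P -> z \notin P -> y != z -> E G x y z ->
  Nm G (~: P) x y + Nm G (~: P) x z + Nm G (~: P) y z <= #|~: P| - 2 ->
  h3 P y z u -> ~~ E G x y u -> E G x z u.
Proof.
move=> H xP yP zP yz Exyz Hle hu nE.
have := @sum_pt_eq T (fPW G P x y z) (fun w => h3 P y z w : nat)
   (fun w => PW_pt w H xP yP zP yz Exyz).
move=> /(_ _ u); rewrite hu.
have -> : \sum_w fPW G P x y z w = Nm G (~: P) x y + Nm G (~: P) x z + Nm G (~: P) y z.
  by rewrite /Nm -!big_split.
rewrite (cnt2 yP zP yz) => /(_ Hle).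
move: hu; rewrite /h3 => /and3P [uP yu zu].
have ux : u != x by apply: contraNneq uP => ->.
rewrite /fPW !inE uP ux (eq_sym u y) (eq_sym u z) yu zu nE /=.
by case: (E G x z u); case: (E G y z u).
Qed.

Lemma exz (T : finType) (G : {set {set T}}) (P : {set T}) x y :
  x \in P -> y \notin P -> Nm G (~: P) x y < #|~: P| - 1 ->
  exists z, [/\ z \notin P, y != z & E G x y z].
Proof.
move=> xP yP Hlt.
case: (pickP (fun z => g2 P y z && E G x y z)) => [z /andP [/and3P [_ zP yz] e] | Hn].
  by exists z.
exfalso.
have := cnt1 yP.
rewrite (sumb_split _ (E G x y)) big1; last by move=> z _; rewrite Hn.
rewrite add0n => e.
have : \sum_z (g2 P y z && ~~ E G x y z : nat) <= Nm G (~: P) x y.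
  rewrite /Nm; apply: leq_sum => z _.
  case g: (g2 P y z) => //=; move: g => /and3P [_ zP yz].
  have zx : z != x by apply: contraNneq zP => ->.
  by rewrite !inE zP zx eq_sym yz /=; case: (E G x y z).
move: Hlt e; move: (\sum_z (g2 P y z && ~~ E G x y z : nat)) => q; clear; lia.
Qed.

Lemma caseII (T : finType) (G : {set {set T}}) (A : {set T}) x k :
  noK G A -> x \in A -> #|~: A| = 3 * k - 1 -> 5 <= k ->
  (forall p q, p != q -> Nm G setT p q <= k - 1) -> False.
Proof.
move=> H xA Hb Hk Hm.
have Hm' : forall p q, p != q -> Nm G (~: A) p q <= k - 1.
  by move=> p q pq; apply: leq_trans (Hm p q pq); apply: Nm_le.
have xn : forall y, y \notin A -> x != y by move=> y yA; apply: contraNneq yA => <-.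
have Kfull : forall y, y \notin A -> Nm G (~: A) x y = k - 1.
  move=> y yA.
  have := Hm' x y (xn y yA); rewrite -/(Nm _ _ _ _) => h1.
  have [z [zA yz Exyz]] : exists z, [/\ z \notin A, y != z & E G x y z].
    apply: exz => //; rewrite Hb; move: h1 Hk; clear; lia.
  have := PWsum H xA yA zA yz Exyz.
  have := Hm' x z (xn z zA); have := Hm' y z yz.
  move: h1; rewrite Hb; move: (Nm G (~: A) x y) (Nm G (~: A) x z) (Nm G (~: A) y z) => p q r.
  move: Hk; clear; lia.
have Kdisj : forall y z u, y \notin A -> z \notin A -> y != z -> E G x y z ->
    h3 A y z u -> ~~ E G x y u -> E G x z u.
  move=> y z u yA zA yz Exyz; apply: PWexact => //.
  have := Hm' x z (xn z zA); have := Hm' y z yz; rewrite (Kfull y yA) Hb.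
  move: (Nm G (~: A) x z) (Nm G (~: A) y z) => q r; move: Hk; clear; lia.
pose K y := [set u | [&& u \notin A, u != y & ~~ E G x y u]].
pose Kc y := y |: K y.
have cardK : forall y, y \notin A -> #|K y| = k - 1.
  move=> y yA; rewrite -(Kfull y yA) /Nm sumb_card; apply: eq_card => u; rewrite !inE.
  case uA: (u \in A) => //=.
  by have -> : u != x by apply: contraNneq (negbT uA) => ->.
have cardKc : forall y, y \notin A -> #|Kc y| = k.
  move=> y yA; rewrite /Kc cardsU1 cardK // !inE eqxx andbF /=.
  by move: Hk; clear; lia.
have KcA : forall y, y \notin A -> Kc y \subset ~: A.
  move=> y yA; apply/subsetP => u; rewrite !inE => /orP [/eqP -> // | /and3P [] //].
have Ksym : forall y u, y \notin A -> u \in K y -> y \in K u.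
  move=> y u yA; rewrite !inE => /and3P [uA uy nE].
  by rewrite yA eq_sym uy -E23.
have Kc_c : forall y u v, y \notin A -> u \in K y -> v \in K y -> u != v -> v \in K u.
  move=> y u v yA uK vK uv.
  have yu := Ksym y u yA uK.
  move: (uK) (vK) yu; rewrite !inE => /and3P [uA uy nEu] /and3P [vA vy nEv] /and3P [_ yu' nEy].
  rewrite vA eq_sym uv /=; apply/negP => Euv.
  have := Kdisj u v y uA vA uv Euv.
  rewrite /h3 yA uy vy => /(_ isT nEy).
  by rewrite -E23 (negbTE nEv).
have Kc_eq : forall y u, y \notin A -> u \in Kc y -> Kc u = Kc y.
  move=> y u yA; rewrite /Kc in_setU1 => /orP [/eqP -> // | uK].
  have uA : u \notin A by move: uK; rewrite !inE => /and3P [].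
  apply/eqP; rewrite eq_sym eqEcard cardKc // cardKc // leqnn andbT.
  apply/subsetP => t; rewrite in_setU1 => /orP [/eqP -> | tK].
    by rewrite in_setU1 Ksym ?orbT.
  case: (eqVneq t u) => [-> | tu]; first by rewrite setU11.
  by rewrite in_setU1 (Kc_c y u t) ?orbT // eq_sym.
have Kdj : forall y0 y1, y0 \notin A -> y1 \notin A -> y1 \notin Kc y0 -> [disjoint Kc y0 & Kc y1].
  move=> y0 y1 y0A y1A y1n; apply/pred0P => t /=; apply/negP => /andP [t0 t1].
  have tA : t \notin A by have := subsetP (KcA y0 y0A) t t0; rewrite inE.
  have e0 := Kc_eq y0 t y0A t0; have e1 := Kc_eq y1 t y1A t1.
  move: y1n; rewrite -e0 e1 /Kc in_setU1 eqxx.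
  by [].
have b0 : 0 < #|~: A| by rewrite Hb; move: Hk; clear; lia.
case/card_gt0P: b0 => y0; rewrite inE => y0A.
have : 0 < #|~: A :\: Kc y0|.
  have h := cardsID (Kc y0) (~: A).
  have := subset_leq_card (subsetIr (~: A) (Kc y0)); rewrite cardKc // => h'.
  move: h h'; rewrite Hb; move: (#|~: A :&: Kc y0|) (#|~: A :\: Kc y0|) => p q.
  move: Hk; clear; lia.
case/card_gt0P => y1; rewrite in_setD in_setC => /andP [y1n y1A].
have : 0 < #|~: A :\: (Kc y0 :|: Kc y1)|.
  have h := cardsID (Kc y0 :|: Kc y1) (~: A).
  have := subset_leq_card (subsetIr (~: A) (Kc y0 :|: Kc y1)) => h'.
  have := (leq_card_setU (Kc y0) (Kc y1)).1; rewrite !cardKc // => h''.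
  move: h h' h''; rewrite Hb.
  move: (#|~: A :&: (Kc y0 :|: Kc y1)|) (#|~: A :\: (Kc y0 :|: Kc y1)|) (#|Kc y0 :|: Kc y1|) => p q r.
  move: Hk; clear; lia.
case/card_gt0P => y2; rewrite in_setD in_setC => /andP [y2n y2A].
have d01 := Kdj y0 y1 y0A y1A y1n.
have d02 : [disjoint Kc y0 & Kc y2].
  by apply: Kdj => //; apply: contra y2n => h; rewrite in_setU h.
have d12 : [disjoint Kc y1 & Kc y2].
  by apply: Kdj => //; apply: contra y2n => h; rewrite in_setU h orbT.
have cU : #|Kc y0 :|: Kc y1 :|: Kc y2| = 3 * k.
  rewrite cardsU cardsU !cardKc //.
  have -> : Kc y0 :&: Kc y1 = set0 by apply/disjoint_setI0.
  have -> : (Kc y0 :|: Kc y1) :&: Kc y2 = set0.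
    by rewrite setIUl (disjoint_setI0 d02) (disjoint_setI0 d12) setU0.
  rewrite !cards0; move: Hk; clear; lia.
have : Kc y0 :|: Kc y1 :|: Kc y2 \subset ~: A.
  by rewrite subUset (KcA y2 y2A) andbT subUset (KcA y0 y0A) (KcA y1 y1A).
move/subset_leq_card; rewrite cU Hb; move: Hk; clear; lia.
Qed.

Lemma half a b k s t : a + b = 4*k -> 1 <= a -> 2 <= b -> a + 6 <= 3*b ->
  a*(b*(b-1)*(b-2)) <= 3*(b-2)*s + a*t -> s + t <= b*(b-1)*(k-1) -> a*b*(b-1) < 4*s.
Proof.
move=> hab ha hb h3 h1 h2.
have e1 : b - 2 + a = 4 * (k - 1) + 2 by lia.
have hc : a <= 3 * (b - 2) by lia.
have hb1 : 0 < b - 1 by lia.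
have hb0 : 0 < b by lia.
move: h1 h2 e1 hc hb1; move: (b - 1) (b - 2) (k - 1) => b1 b2 k1 h1 h2 e1 hc hb1.
have X0 : 0 < a * b * b1 by rewrite !muln_gt0 ha hb0 hb1.
have f1 : a * b * b1 * b2 <= 3 * (b2 * s) + a * t.
  by move: h1; rewrite !mulnA.
have f2 : a * s + a * t <= a * b * b1 * k1.
  have : a * (s + t) <= a * (b * b1 * k1) by rewrite leq_mul2l h2 orbT.
  by rewrite mulnDr !mulnA.
have f3 : a * b * b1 * b2 + a * b * b1 * a = 4 * (a * b * b1 * k1) + 2 * (a * b * b1).
  by rewrite -mulnDr e1; ring.
have f4 : a * b * b1 * a <= 3 * (a * b * b1 * b2).
  by rewrite mulnCA leq_mul2l hc orbT.
have f5 : a * s <= 3 * (b2 * s) by rewrite mulnA leq_mul2r hc orbT.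
rewrite ltnNge; apply/negP => hs.
have f6 : (3 * b2 - a) * (4 * s) <= (3 * b2 - a) * (a * b * b1) by rewrite leq_mul2l hs orbT.
have f7 : (3 * b2 - a) * (4 * s) = 4 * (3 * (b2 * s)) - 4 * (a * s).
  by rewrite mulnBl; congr (_ - _); ring.
have f8 : (3 * b2 - a) * (a * b * b1) = 3 * (a * b * b1 * b2) - a * b * b1 * a.
  by rewrite mulnBl; congr (_ - _); ring.
rewrite f7 f8 in f6.
move: X0 f1 f2 f3 f4 f5 f6.
move: (a * b * b1 * b2) (a * b * b1 * k1) (a * b * b1 * a) (a * s) (a * t) (b2 * s) (a * b * b1).
move=> p q r u v w x; clear; lia.
Qed.

Lemma final a b k s1 t1 s2 t2 : a + b = 4*k -> k + 2 <= a -> 4 * a < 5 * k ->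
  a*(b*(b-1)*(b-2)) <= 3*(b-2)*s1 + a*t1 -> s1 + t1 <= b*(b-1)*(k-1) ->
  b*(a*(a-1)*(a-2)) <= 3*(a-2)*s2 + b*t2 -> s2 + t2 <= a*(a-1)*(k-1) ->
  s1 + s2 <= a * b * (k-1) -> False.
Proof.
move=> hab h1 h2 H1 H2 H3 H4 H5.
have g1 := @half a b k s1 t1 hab ltac:(lia) ltac:(lia) ltac:(lia) H1 H2.
have hba : b + a = 4 * k by lia.
have g2 := @half b a k s2 t2 hba ltac:(lia) ltac:(lia) ltac:(lia) H3 H4.
have e : a * b * (b - 1) + b * a * (a - 1) = 4 * (a * b * (k - 1)) + 2 * (a * b).
  have -> : b * a * (a - 1) = a * b * (a - 1) by ring.
  rewrite -mulnDr (_ : b - 1 + (a - 1) = 4 * (k - 1) + 2) ?mulnDr; last by lia.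
  ring.
have : 0 < a * b by rewrite muln_gt0; apply/andP; split; lia.
move: g1 g2 e H5; move: (a * b * (b - 1)) (b * a * (a - 1)) (a * b * (k - 1)) (a * b).
move=> p q r x; clear; lia.
Qed.

Theorem lemma8p10 (T : finType) (G : {set {set T}}) (A : {set T}) :
  is_3graph G ->
  4 %| #|T| ->
  (forall x y : T, x != y -> 3 * #|T| <= 4 * codeg G x y + 4) ->
  3 * #|T| < 16 * #|A| ->
  16 * #|A| < 5 * #|T| ->
  exists S : {set T}, is_K43 G S /\ odd #|S :&: A| /\ odd #|S :&: ~: A|.
Proof.
move=> H3 Hdiv Hcod Hlo Hhi.
case: (classic (exists S : {set T}, is_K43 G S /\ odd #|S :&: A| /\ odd #|S :&: ~: A|)) => // Hno.
exfalso.
have nA : noK G A.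
  move=> x y z w xP yP zP wP yz yw zw e1 e2 e3 e4.
  exact: Hno (mkK4 xP yP zP wP yz yw zw e1 e2 e3 e4).
have nB : noK G (~: A).
  move=> x y z w xP yP zP wP yz yw zw e1 e2 e3 e4.
  have [S [HS [o1 o2]]] := mkK4 xP yP zP wP yz yw zw e1 e2 e3 e4.
  by apply: Hno; exists S; rewrite setCK in o2.
case/dvdnP: Hdiv => k Hn.
have Hm : forall p q, p != q -> Nm G setT p q <= k - 1.
  move=> p q pq; have := miss_bound H3 pq (Hcod p q pq); rewrite Hn.
  move: (Nm G setT p q) => r; clear; lia.
have Hab := cardsC A.
move: Hlo Hhi; rewrite Hn => Hlo Hhi.
have [HI | HII] : #|A| <= k \/ k < #|A| by lia.
-
  have : 0 < #|A| by move: Hlo; clear; lia.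
  case/card_gt0P => x xA.
  have : 0 < #|~: A| by move: Hlo Hhi Hab; rewrite Hn; clear; lia.
  case/card_gt0P => y; rewrite inE => yA.
  have xy : x != y by apply: contraNneq yA => <-.
  have [z [zA yz Exyz]] : exists z, [/\ z \notin A, y != z & E G x y z].
    apply: exz => //; apply: leq_ltn_trans (leq_trans (Nm_le _ _ _ _) (Hm x y xy)) _.
    move: Hlo Hhi Hab HI; rewrite Hn; clear; lia.
  have := PWsum nA xA yA zA yz Exyz.
  have xz : x != z by apply: contraNneq zA => <-.
  have h1 := leq_trans (@Nm_le _ G (~: A) x y) (Hm x y xy).
  have h2 := leq_trans (@Nm_le _ G (~: A) x z) (Hm x z xz).
  have h3 := leq_trans (@Nm_le _ G (~: A) y z) (Hm y z yz).
  move: h1 h2 h3 Hlo Hhi Hab HI; rewrite Hn.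
  move: (Nm G (~: A) x y) (Nm G (~: A) x z) (Nm G (~: A) y z) (#|A|) (#|~: A|) => p q r a b.
  clear; lia.
have [HII' | HIII] : #|A| = k.+1 \/ k.+2 <= #|A| by lia.
-
  have : 0 < #|A| by move: Hlo; clear; lia.
  case/card_gt0P => x xA.
  apply: (caseII nA xA _ _ Hm).
    by move: Hab; rewrite Hn HII'; clear; lia.
  by move: Hhi; rewrite HII'; clear; lia.
-
  have f1 := F1 nA.
  have f1b := F1b A Hm.
  have f2 := F1 nB; rewrite setCK in f2.
  have f2b := F1b (~: A) Hm; rewrite setCK in f2b.
  have f3 := F3 A Hm.
  apply: (@final #|A| #|~: A| k _ _ _ _ _ _ _ f1 f1b f2 f2b f3).
  + by move: Hab; rewrite Hn; clear; lia.
  + by move: HIII; clear; lia.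
  + by move: Hhi; clear; lia.
Qed.
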